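(* Let $M$ be a free $\mathbb{Z}$-module of rank $2g$ with basis $\{a_1, \dots, a_g, b_1, \dots, b_g\}$ and the skew-symmetric bilinear pairing $\langle \cdot, \cdot \rangle$ determined by $\langle a_{i}, b_{i} \rangle = -1$ and $\langle a_{i}, a_{j} \rangle = \langle b_{i}, b_{j} \rangle = \langle a_{i}, b_{j} \rangle = 0$ for $i < j$. Let $c_{1}, \dots, c_{2g} \in M$ with $c_{i} \equiv a_{(i + 1)/2} + \dots + a_{g} + b_{(i + 1)/2} \pmod{2M}$ for $i$ odd and $c_{i} \equiv a_{i/2 + 1} + \dots + a_{g} + b_{i/2} \pmod{2M}$ for $i$ even. Let $t_{i} = T_{c_{i}} - 1$ and let $\bar{t}_{i}$ be the reduction of $t_{i}$ modulo $2$, an element of $\mathfrak{sp}(M \otimes \mathbb{F}_{2})$, for $1 \leq i \leq 2g$. Then the set $\{\bar{t}_{i}\}_{1 \leq i \leq 2g} \cup \{[\bar{t}_{i}, \bar{t}_{j}]\}_{1 \leq i < j \leq 2g}$ is an $\mathbb{F}_{2}$-basis of $\mathfrak{sp}(M \otimes \mathbb{F}_{2})$.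
   Context: For $c \in M$, $T_c$ is the transvection $v \mapsto v + \langle v, c\rangle c$. $\mathfrak{sp}(M\otimes\mathbb{F}_2)$ is the $\mathbb{F}_2$-Lie algebra of endomorphisms $X$ of $M\otimes\mathbb{F}_2$ with $\langle Xv, w\rangle + \langle v, Xw\rangle = 0$ for all $v,w$ (of dimension $2g^2+g$), with bracket $[X,Y]=XY-YX$. *)

(* Defs.v *)
From HB Require Import structures.
From mathcomp Require Import all_boot all_order all_algebra.
Set Implicit Arguments. Unset Strict Implicit. Unset Printing Implicit Defensive.
Import Order.TTheory GRing.Theory Num.Theory.
Local Open Scope ring_scope.

(* M = Z^(2g) (column vectors), coordinates indexed by 'I_(g+g):
   a_j = e_(lshift g j), b_j = e_(rshift g j) for j : 'I_g (0-based;
   paper's a_(j+1), b_(j+1)). M (x) F_2 = 'cV['F_2]_(g+g). *)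

Definition avec (R : pzRingType) (g : nat) (j : 'I_g) : 'cV[R]_(g+g) :=
  delta_mx (lshift g j) 0.
Definition bvec (R : pzRingType) (g : nat) (j : 'I_g) : 'cV[R]_(g+g) :=
  delta_mx (rshift g j) 0.

(* The skew-symmetric bilinear pairing with <a_i,b_i> = -1 and all other
   pairings of basis vectors (i<j, and hence by skew symmetry all) zero:
   <v,w> = sum_i (v_{b_i} w_{a_i} - v_{a_i} w_{b_i}). Defined over any ring;
   over 'F_2 it is the reduction of the pairing on M. *)
Definition pairing (R : pzRingType) (g : nat) (v w : 'cV[R]_(g+g)) : R :=
  \sum_(i < g) (v (rshift g i) 0 * w (lshift g i) 0
                - v (lshift g i) 0 * w (rshift g i) 0).

Definition transv (g : nat) (c v : 'cV[int]_(g+g)) : 'cV[int]_(g+g) :=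
  v + pairing v c *: c.

Definition tmx (g : nat) (c : 'cV[int]_(g+g)) : 'M[int]_(g+g) :=
  \matrix_(i, j) ((transv c (delta_mx j 0) - delta_mx j 0) i 0).

Definition tbar (g : nat) (c : 'cV[int]_(g+g)) : 'M['F_2]_(g+g) :=
  map_mx (fun z : int => z%:~R) (tmx c).

Definition sp (g : nat) (X : 'M['F_2]_(g+g)) : Prop :=
  forall v w : 'cV['F_2]_(g+g), pairing (X *m v) w + pairing v (X *m w) = 0.

Definition lie (R : pzRingType) (n : nat) (X Y : 'M[R]_n) : 'M[R]_n :=
  X *m Y - Y *m X.

(* target vector for c_i, i 1-based (1 <= i <= 2g):
   i odd : a_{(i+1)/2} + ... + a_g + b_{(i+1)/2}
   i even: a_{i/2+1} + ... + a_g + b_{i/2}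
   (a 0-based j corresponds to paper index j+1) *)
Definition ctarget (g : nat) (i : nat) : 'cV[int]_(g+g) :=
  if odd i then
    \sum_(j < g | ((i.+1)./2 <= j.+1)%N) avec _ j
      + \sum_(j < g | (j.+1 == (i.+1)./2)%N) bvec _ j
  else
    \sum_(j < g | (i./2 + 1 <= j.+1)%N) avec _ j
      + \sum_(j < g | (j.+1 == i./2)%N) bvec _ j.

Definition ltpair (n : nat) := {p : 'I_n * 'I_n | (p.1 < p.2)%N}.

Definition tfamily (R : pzRingType) (n : nat) (t : 'I_n -> 'M[R]_n)
  (x : 'I_n + ltpair n) : 'M[R]_n :=
  match x with
  | inl i => t i
  | inr p => lie (t (val p).1) (t (val p).2)
  end.

Definition is_basis_of (F : fieldType) (n : nat) (P : 'M[F]_n -> Prop)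
  (I : finType) (f : I -> 'M[F]_n) : Prop :=
  [/\ forall i, P (f i),
      forall l : I -> F, \sum_i l i *: f i = 0 -> forall i, l i = 0
    & forall X, P X -> exists l : I -> F, X = \sum_i l i *: f i].

(* Main.v *)
Require Import Defs.
From HB Require Import structures.
From mathcomp Require Import all_boot all_order all_algebra zify.
Set Implicit Arguments. Unset Strict Implicit.
Import GRing.Theory.
Local Open Scope ring_scope.

Lemma F2_add (x : 'F_2) : x + x = 0.
Proof. apply: addrr_pchar2. exact: (pchar_Fp (p:=2)). Qed.
Lemma F2_opp (x : 'F_2) : - x = x.
Proof. by rewrite -[LHS]add0r -(F2_add x) addrK. Qed.
Lemma F2mx_add m n (A : 'M['F_2]_(m,n)) : A + A = 0.
Proof. by apply/matrixP => i j; rewrite !mxE F2_add. Qed.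
Lemma F2mx_opp m n (A : 'M['F_2]_(m,n)) : - A = A.
Proof. by apply/matrixP => i j; rewrite !mxE F2_opp. Qed.
Lemma entry_delta (R : comPzRingType) n (A : 'M[R]_n) i j :
  (delta_mx 0 i *m A *m delta_mx j 0 : 'M_1) 0 0 = A i j.
Proof. by rewrite -rowE -colE !mxE. Qed.

Lemma delta_sandwich (R : comPzRingType) n (A : 'M[R]_n) i j :
  delta_mx i i *m A *m delta_mx j j = A i j *: delta_mx i j.
Proof.
rewrite -(mul_delta_mx (0 : 'I_1) i i) -(mul_delta_mx (0 : 'I_1) j j).
rewrite !mulmxA -(mulmxA (delta_mx i 0) _ A) -(mulmxA (delta_mx i 0) _ (delta_mx j 0)).
have -> : delta_mx 0 i *m A *m delta_mx j 0 = (A i j)%:M :> 'M_1.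
  by apply/matrixP => a b; rewrite !ord1 entry_delta mxE.
by rewrite mul_mx_scalar -scalemxAl mul_delta_mx.
Qed.

Definition Emx n (x : 'I_n + ltpair n) : 'M['F_2]_n :=
  match x with
  | inl i => delta_mx i i
  | inr p => delta_mx (val p).1 (val p).2 + delta_mx (val p).2 (val p).1
  end.

Definition rowx n (x : 'I_n + ltpair n) : 'I_n :=
  match x with inl i => i | inr p => (val p).1 end.
Definition colx n (x : 'I_n + ltpair n) : 'I_n :=
  match x with inl i => i | inr p => (val p).2 end.

Lemma Emx_tr n x : (@Emx n x)^T = Emx x.
Proof. by case: x => [i|p] /=; rewrite ?linearD /= !trmx_delta // addrC. Qed.

Definition Smx n (l : 'I_n + ltpair n -> 'F_2) := \sum_x l x *: Emx x.

Lemma Smx_tr n l : (@Smx n l)^T = Smx l.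
Proof.
rewrite /Smx linear_sum /=; apply: eq_bigr => x _.
by rewrite linearZ /= Emx_tr.
Qed.

Lemma Smx_coef n l x : @Smx n l (rowx x) (colx x) = l x.
Proof.
rewrite /Smx summxE big_sumType /=.
case: x => [i|p] /=.
  rewrite (bigD1 i) //= big1 => [|k /negbTE kn]; last first.
    by rewrite !mxE eq_sym kn /= mulr0.
  rewrite big1 => [|q _]; last first.
    rewrite !mxE; case: q => [[a b] /= hab].
    have -> : ((i == a) && (i == b)) = false.
      by apply/negP => /andP [/eqP e1 /eqP e2]; move: hab; rewrite -e1 -e2 ltnn.
    have -> : ((i == b) && (i == a)) = false.
      by apply/negP => /andP [/eqP e1 /eqP e2]; move: hab; rewrite -e1 -e2 ltnn.
    by rewrite addr0 mulr0.
  by rewrite !mxE !eqxx andbT mulr_natr !addr0.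
rewrite big1 => [|k _]; last first.
  rewrite !mxE; case: p => [[a b] /= hab].
  have -> : ((a == k) && (b == k)) = false.
    by apply/negP => /andP [/eqP e1 /eqP e2]; move: hab; rewrite e1 e2 ltnn.
  by rewrite mulr0.
rewrite add0r (bigD1 p) //= big1 => [|q qp]; last first.
  rewrite !mxE; case: q qp => [[a b] /= hab] qp.
  case: p qp => [[a' b'] /= hab'] qp.
  have -> : ((a' == a) && (b' == b)) = false.
    apply/negP => /andP [/eqP e1 /eqP e2]; move: qp; subst.
    by rewrite (bool_irrelevance hab hab') eqxx.
  have -> : ((a' == b) && (b' == a)) = false.
    apply/negP => /andP [/eqP e1 /eqP e2]; subst.
    by move: (ltn_trans hab hab'); rewrite ltnn.
  by rewrite addr0 mulr0.
case: p => [[a b] /= hab].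
rewrite !mxE !eqxx andbT.
have -> : ((a == b) && (b == a)) = false.
  by apply/negP => /andP [/eqP e1 _]; move: hab; rewrite e1 ltnn.
by rewrite (_ : (true%:R + false%:R : 'F_2) = 1) ?mulr1 // addr0.
Qed.

Lemma Smx_of_sym n (L : 'M['F_2]_n) :
  L^T = L -> Smx (fun x => L (rowx x) (colx x)) = L.
Proof.
move=> hL; set S := Smx _.
have hS : forall x, S (rowx x) (colx x) = L (rowx x) (colx x) by move=> x; exact: Smx_coef.
have St : S^T = S by exact: Smx_tr.
apply/matrixP => a b; case: (ltngtP a b) => [ab|ba|eab].
- exact: (hS (inr (exist _ (a, b) ab))).
- rewrite -[in LHS]St -[in RHS]hL !mxE; exact: (hS (inr (exist _ (b, a) ba))).
- have e : a = b by apply: val_inj.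
  subst b; exact: (hS (inl a)).
Qed.

Lemma abstract_basis n (P C G : 'M['F_2]_n) (hP : P^T = P) (hG : G^T = G)
  (hCG : C^T *m P *m C = G) (hGG : G *m G = 1%:M)
  (hGoff : forall i j, i != j -> G i j = 1)
  (spc : 'M['F_2]_n -> Prop) (hsp : forall X, spc X <-> X^T *m P + P *m X = 0)
  (t : 'I_n -> 'M['F_2]_n) (ht : forall k, t k = C *m delta_mx k k *m C^T *m P) :
  is_basis_of spc (tfamily t).
Proof.
have hprod : forall A B, (C *m A *m C^T *m P) *m (C *m B *m C^T *m P)
    = C *m (A *m G *m B) *m C^T *m P.
  by move=> A B; rewrite -hCG !mulmxA.
have fam : forall x, tfamily t x = C *m Emx x *m C^T *m P.
  case => [i|p]; first exact: ht.
  case: p => [[i j] /= hij].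
  change (lie (t i) (t j) = C *m (delta_mx i j + delta_mx j i) *m C^T *m P).
  rewrite /lie !ht.
  rewrite (hprod (delta_mx i i)) (hprod (delta_mx j j)).
  have -> : delta_mx i i *m G *m delta_mx j j = delta_mx i j.
    by rewrite delta_sandwich hGoff ?scale1r //; apply/eqP => e; move: hij; rewrite e ltnn.
  have -> : delta_mx j j *m G *m delta_mx i i = delta_mx j i.
    by rewrite delta_sandwich hGoff ?scale1r //; apply/eqP => e; move: hij; rewrite e ltnn.
  by rewrite F2mx_opp mulmxDr !mulmxDl.
have sumfam : forall l, \sum_x l x *: tfamily t x = C *m Smx l *m C^T *m P.
  move=> l; rewrite /Smx mulmx_sumr !mulmx_suml; apply: eq_bigr => x _.
  by rewrite fam -scalemxAr !scalemxAl.
have e1 : G *m C^T *m P *m C = 1%:M by rewrite -hGG -hCG !mulmxA.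
have Hinv : C *m (G *m C^T *m P) = 1%:M by apply: mulmx1C.
have Lsolve : forall L, (G *m C^T *m P) *m (C *m L *m C^T *m P) *m (C *m G) = L.
  move=> L; rewrite !mulmxA e1 mul1mx.
  have -> : L *m C^T *m P *m C = L *m G by rewrite -hCG !mulmxA.
  by rewrite -mulmxA hGG mulmx1.
split.
- move=> x; apply/hsp; rewrite fam.
  by rewrite !trmx_mul !trmxK hP Emx_tr !mulmxA F2mx_add.
- move=> l hl x; rewrite sumfam in hl.
  have S0 : Smx l = 0 by rewrite -(Lsolve (Smx l)) hl mulmx0 mul0mx.
  by rewrite -(Smx_coef l x) S0 mxE.
- move=> X /hsp hX.
  have hX' : X^T *m P = P *m X.
    by apply/eqP; rewrite -[P *m X]F2mx_opp -addr_eq0 hX.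
  set L := G *m C^T *m P *m X *m C *m G.
  have hL : L^T = L.
    rewrite /L !trmx_mul !trmxK hG hP !mulmxA -(mulmxA _ X^T P) hX'.
    by rewrite !mulmxA.
  exists (fun x => L (rowx x) (colx x)).
  rewrite sumfam Smx_of_sym //.
  have -> : C *m L *m C^T *m P
      = (C *m (G *m C^T *m P)) *m X *m (C *m (G *m C^T *m P)).
    by rewrite /L !mulmxA.
  by rewrite Hinv mul1mx mulmx1.
Qed.

Lemma F2_sub (x y : 'F_2) : x - y = x + y.
Proof. by rewrite F2_opp. Qed.

Definition Pmx g : 'M['F_2]_(g+g) := block_mx 0 1%:M 1%:M 0.

Lemma Pmx_tr g : (Pmx g)^T = Pmx g.
Proof. by rewrite /Pmx tr_block_mx !trmx0 trmx1. Qed.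

Lemma pairingP g (v w : 'cV['F_2]_(g+g)) :
  pairing v w = (v^T *m Pmx g *m w) 0 0.
Proof.
rewrite -[v in RHS]vsubmxK -[w in RHS]vsubmxK tr_col_mx /Pmx mul_row_block.
rewrite mul_row_col !mulmx0 !mulmx1 !add0r !addr0 /pairing !mxE -big_split /=.
apply: eq_bigr => k _; rewrite !mxE F2_sub addrC.
done.
Qed.

Lemma sp_form g (X : 'M['F_2]_(g+g)) v w :
  pairing (X *m v) w + pairing v (X *m w) =
  (v^T *m (X^T *m Pmx g + Pmx g *m X) *m w) 0 0.
Proof.
rewrite !pairingP mulmxDr mulmxDl [in RHS]mxE trmx_mul !mulmxA.
done.
Qed.

Lemma spP g (X : 'M['F_2]_(g+g)) :
  sp X <-> X^T *m Pmx g + Pmx g *m X = 0.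
Proof.
split.
  move=> H; apply/matrixP => i j; rewrite [RHS]mxE -entry_delta.
  by have := H (delta_mx i 0) (delta_mx j 0); rewrite sp_form trmx_delta.
by move=> H v w; rewrite sp_form H mulmx0 mul0mx mxE.
Qed.

Lemma pairingC g (v w : 'cV['F_2]_(g+g)) : pairing v w = pairing w v.
Proof.
rewrite /pairing; apply: eq_bigr => k _.
by rewrite !F2_sub addrC mulrC [X in _ + X]mulrC.
Qed.

Lemma pairing_map g (v w : 'cV[int]_(g+g)) :
  ((pairing v w)%:~R : 'F_2) =
  pairing (map_mx (fun z : int => (z%:~R : 'F_2)) v) (map_mx (fun z : int => (z%:~R : 'F_2)) w).
Proof.
rewrite /pairing rmorph_sum; apply: eq_bigr => k _.
by rewrite rmorphB !rmorphM !mxE.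
Qed.

Lemma map_delta g (j : 'I_(g+g)) :
  map_mx (fun z : int => (z%:~R : 'F_2)) (delta_mx j 0 : 'cV[int]_(g+g)) = delta_mx j 0.
Proof. by apply/matrixP => a b; rewrite !mxE rmorph_nat. Qed.

Lemma sum_delta (R : pzRingType) N (I : finType) (Q : pred I) (f : I -> 'I_N) (x : 'I_N) :
  (\sum_(j | Q j) (delta_mx (f j) 0 : 'cV[R]_N)) x 0 = \sum_(j | Q j) (x == f j)%:R.
Proof. by rewrite summxE; apply: eq_bigr => j _; rewrite mxE eqxx andbT. Qed.

Lemma sum_ind (R : pzRingType) g (Q : pred 'I_g) (k : 'I_g) :
  \sum_(j | Q j) ((k == j)%:R : R) = (Q k)%:R.
Proof.
case: (boolP (Q k)) => Qk.
  rewrite (bigD1 k) //= eqxx big1 ?addr0 // => j /andP [_ /negbTE].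
  by rewrite eq_sym => ->.
by rewrite big1 // => j Qj; case: eqP => // e; move: Qk; rewrite e Qj.
Qed.

Lemma ctarget_l g M (k : 'I_g) :
  ctarget g M (lshift g k) 0 = (M./2 + 1 <= k.+1)%:R.
Proof.
rewrite /ctarget; case: ifP => oM; rewrite mxE !sum_delta.
- under [X in X + _]eq_bigr do rewrite eq_lshift.
  under [X in _ + X]eq_bigr do rewrite eq_lrshift.
  rewrite sum_ind big1 // addr0.
  by rewrite -uphalfE uphalf_half oM addnC.
- under [X in X + _]eq_bigr do rewrite eq_lshift.
  under [X in _ + X]eq_bigr do rewrite eq_lrshift.
  by rewrite sum_ind big1 // addr0.
Qed.

Lemma ctarget_r g M (k : 'I_g) :
  ctarget g M (rshift g k) 0 = (k.+1 == M.+1./2)%:R.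
Proof.
rewrite /ctarget; case: ifP => oM; rewrite mxE !sum_delta.
- under [X in X + _]eq_bigr do rewrite eq_rlshift.
  under [X in _ + X]eq_bigr do rewrite eq_rshift.
  by rewrite sum_ind big1 // add0r.
- under [X in X + _]eq_bigr do rewrite eq_rlshift.
  under [X in _ + X]eq_bigr do rewrite eq_rshift.
  by rewrite sum_ind big1 // add0r -uphalfE uphalf_half oM.
Qed.

Lemma sum_pick g (a b : nat) : (0 < b <= g)%N ->
  \sum_(k < g) ((k.+1 == b)%:R * (a <= k.+1)%N%:R : 'F_2) = (a <= b)%N%:R.
Proof.
move=> hb; have hb' : (b.-1 < g)%N by lia.
rewrite (bigD1 (Ordinal hb')) //= big1 ?addr0.
  have -> : (b.-1).+1 = b by lia.
  by rewrite eqxx; exact: mul1r.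
move=> k hk; case: (eqVneq k.+1 b) => e; last exact: mul0r.
have ek : k = Ordinal hb' by apply: val_inj => /=; lia.
by rewrite ek eqxx in hk.
Qed.

Lemma final_arith g (i j : 'I_(g+g)) :
  ((j.+1./2 + 1 <= i.+2./2)%N%:R + (i.+1./2 + 1 <= j.+2./2)%N%:R : 'F_2) = (i != j)%:R.
Proof.
case: (ltngtP i j) => h.
- have -> : (j.+1./2 + 1 <= i.+2./2)%N = false by apply/negbTE; rewrite -!divn2; lia.
  have -> : (i.+1./2 + 1 <= j.+2./2)%N = true by rewrite -!divn2; lia.
  by rewrite add0r (_ : (i != j) = true) //; apply/eqP => e; move: h; rewrite e ltnn.
- have -> : (j.+1./2 + 1 <= i.+2./2)%N = true by rewrite -!divn2; lia.
  have -> : (i.+1./2 + 1 <= j.+2./2)%N = false by apply/negbTE; rewrite -!divn2; lia.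
  by rewrite addr0 (_ : (i != j) = true) //; apply/eqP => e; move: h; rewrite e ltnn.
- have e : i = j by apply: val_inj.
  by rewrite e F2_add eqxx.
Qed.

Theorem lemma3p2 (g : nat) (c : 'I_(g+g) -> 'cV[int]_(g+g))
  (hc : forall m : 'I_(g+g),
      exists d : 'cV[int]_(g+g), c m - ctarget g m.+1 = d *+ 2) :
  is_basis_of (sp (g:=g)) (tfamily (fun m => tbar (c m))).
Proof.
pose cb m := map_mx (fun z : int => (z%:~R : 'F_2)) (c m).
have cbE : forall m x, cb m x 0 = (ctarget g m.+1 x 0)%:~R.
  move=> m x; have [d hd] := hc m; rewrite /cb mxE.
  have -> : c m = ctarget g m.+1 + d *+ 2 by apply/eqP; rewrite addrC -subr_eq hd.
  by rewrite mxE mulmxnE rmorphD rmorphMn mulr2n F2_add addr0.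
have cbl : forall m k, cb m (lshift g k) 0 = (m.+1./2 + 1 <= k.+1)%N%:R.
  by move=> m k; rewrite cbE ctarget_l rmorph_nat.
have cbr : forall m k, cb m (rshift g k) 0 = (k.+1 == m.+2./2)%:R.
  by move=> m k; rewrite cbE ctarget_r rmorph_nat.
have gram : forall i j, pairing (cb i) (cb j) = (i != j)%:R.
  move=> i j; rewrite /pairing.
  under eq_bigr do rewrite !cbl !cbr F2_sub [X in _ + X]mulrC.
  rewrite big_split /= !sum_pick; first exact: final_arith.
  - by move: (ltn_ord j) => hj; rewrite -divn2; lia.
  - by move: (ltn_ord i) => hi; rewrite -divn2; lia.
pose C : 'M['F_2]_(g+g) := \matrix_(i, k) cb k i 0.
have colC : forall k, col k C = cb k.
  by move=> k; apply/matrixP => a b; rewrite !mxE ord1.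
pose G : 'M['F_2]_(g+g) := const_mx 1 - 1%:M.
apply: (@abstract_basis _ (Pmx g) C G).
- exact: Pmx_tr.
- by rewrite /G linearB /= trmx_const trmx1.
- apply/(@matrixP _ (g+g) (g+g)) => i j; rewrite -entry_delta !mulmxA.
  have -> : delta_mx 0 i *m C^T = (col i C)^T by rewrite colE trmx_mul trmx_delta.
  rewrite -mulmxA -colE !colC -pairingP gram /G !mxE.
  by case: eqP => _; rewrite ?subr0 ?subrr.
- have JJ : (const_mx 1 : 'M['F_2]_(g+g)) *m (const_mx 1 : 'M['F_2]_(g+g)) = 0.
    apply/matrixP => i j; rewrite !mxE.
    under eq_bigr do rewrite !mxE mulr1.
    by rewrite sumr_const card_ord mulrnDr F2_add.
  rewrite /G mulmxBl !mulmxBr JJ mulmx1 mul1mx sub0r opprB.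
  by rewrite mulmx1 !F2mx_opp addrCA F2mx_add addr0.
- move=> i j hij; rewrite /G !mxE (negbTE hij); exact: subr0.
- exact: spP.
- move=> k.
  have e : C *m delta_mx k k *m C^T = cb k *m (cb k)^T.
    rewrite -(mul_delta_mx (0:'I_1)) mulmxA -colE -mulmxA -rowE -tr_col colC.
    done.
  rewrite e; apply/(@matrixP _ (g+g) (g+g)) => i j; rewrite -mulmxA [RHS]mxE big_ord1.
  have -> : ((cb k)^T *m Pmx g) 0 j = pairing (cb k) (delta_mx j 0).
    by rewrite pairingP -colE [RHS]mxE.
  rewrite pairingC -map_delta -pairing_map /tbar /tmx !mxE.
  by rewrite addrC addKr rmorphM; exact: mulrC.
Qed.
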